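(* Let $A, B$ be $2n\times 2n$ real symmetric positive semidefinite matrices whose kernels are symplectic subspaces of $\mathbb{R}^{2n}$. If $d(A) \prec d(B)$, then there exist real symplectic matrices $M_\pi \in \operatorname{Sp}(2n)$, indexed by $\pi \in S_n$, and a probability vector $(p(\pi))_{\pi\in S_n}$ (non-negative entries summing to $1$) such that $$A = \sum_{\pi \in S_n} p(\pi)\, M_\pi^T B M_\pi .$$ In particular, $A$ lies in the convex hull of the symplectic orbit $\{M^TBM : M \in \operatorname{Sp}(2n)\}$ of $B$.
   Context: Let $J = \begin{bmatrix} 0 & I_n \\ -I_n & 0\end{bmatrix}$. A real $2n\times 2n$ matrix $M$ is symplectic if $M^TJM = J$; $\operatorname{Sp}(2n)$ denotes the group of such matrices. A linear subspace $W\subseteq\mathbb{R}^{2n}$ is symplectic if for every $0\neq u\in W$ there is $v\in W$ with $u^TJv\neq 0$. For a real symmetric positive semidefinite $2n\times 2n$ matrix $A$ whose kernel is a symplectic subspace, there is $M\in\operatorname{Sp}(2n)$ with $M^TAM = D\oplus D$ where $D$ is an $n\times n$ diagonal matrix with non-negative entries, unique up to permutation of its diagonal entries (generalized Williamson theorem); these diagonal entries are the symplectic eigenvalues of $A$, and $d(A) = (d_1(A),\dots,d_n(A))$ denotes them arranged in non-decreasing order. $S_n$ is the symmetric group on $\{1,\dots,n\}$. For $x\in\mathbb{R}^n$, $x^\uparrow$ denotes $x$ with entries rearranged in non-decreasing order. For $x,y\in\mathbb{R}^n$, $x\prec y$ ($x$ is majorized by $y$) means $\sum_{j=1}^k x^\uparrow_j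 \ge \sum_{j=1}^k y^\uparrow_j$ for $1\le k\le n$, with equality for $k=n$. *)

(* Defs.v *)
From HB Require Import structures.
From mathcomp Require Import all_boot all_order all_algebra all_fingroup.
From mathcomp Require Import reals.
Set Implicit Arguments. Unset Strict Implicit. Unset Printing Implicit Defensive.
Import Order.TTheory GRing.Theory Num.Theory.
Local Open Scope ring_scope.

Definition Jmx (R : realType) (n : nat) : 'M[R]_(n + n) :=
  block_mx 0 1%:M (- 1%:M) 0.

Definition symplectic (R : realType) (n : nat) (M : 'M[R]_(n + n)) : Prop :=
  M^T *m Jmx R n *m M = Jmx R n.

Definition sym_psd (R : realType) (m : nat) (A : 'M[R]_m) : Prop :=
  A^T = A /\ forall x : 'cV[R]_m, 0 <= (x^T *m A *m x) 0 0.

(* the kernel {u | A u = 0} of A is a symplectic subspace *)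
Definition symplectic_kernel (R : realType) (n : nat) (A : 'M[R]_(n + n)) : Prop :=
  forall u : 'cV[R]_(n + n), A *m u = 0 -> u != 0 ->
    exists2 v : 'cV[R]_(n + n), A *m v = 0 & (u^T *m Jmx R n *m v) 0 0 != 0.

(* d is the vector d(A) of symplectic eigenvalues of A, in non-decreasing
   order: d >= 0, sorted, and M^T A M = D (+) D for some symplectic M with
   D = diag(d).  (By the generalized Williamson theorem such d exists and is
   unique when A is psd with symplectic kernel.) *)
Definition symp_eigs (R : realType) (n : nat) (A : 'M[R]_(n + n)) (d : 'rV[R]_n)
  : Prop :=
  (forall i, 0 <= d 0 i) /\
  (forall i j : 'I_n, (i <= j)%N -> d 0 i <= d 0 j) /\
  exists2 M : 'M[R]_(n + n), symplectic M &
    M^T *m A *m M = block_mx (diag_mx d) 0 0 (diag_mx d).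

Definition sort_up (R : realType) (n : nat) (x : 'rV[R]_n) : seq R :=
  sort <=%R [seq x 0 i | i <- enum 'I_n].

Definition majorized (R : realType) (n : nat) (x y : 'rV[R]_n) : Prop :=
  (forall k : nat, (1 <= k <= n)%N ->
     \sum_(0 <= j < k) (sort_up y)`_j <= \sum_(0 <= j < k) (sort_up x)`_j) /\
  \sum_(0 <= j < n) (sort_up x)`_j = \sum_(0 <= j < n) (sort_up y)`_j.

(* Main.v *)
Require Import Defs.
From HB Require Import structures.
From mathcomp Require Import all_boot all_order all_algebra all_fingroup.
From mathcomp Require Import reals.
From mathcomp Require Import lra zify.
Import Order.TTheory GRing.Theory Num.Theory.
Local Open Scope ring_scope.
Set Implicit Arguments. Unset Strict Implicit. Unset Printing Implicit Defensive.
Section Cp.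
Variable R : realType.
Variable n : nat.
Implicit Types x y : 'I_n -> R.

Definition cp x y := exists p : 'S_n -> R,
  [/\ forall s, 0 <= p s, \sum_s p s = 1 & forall i, x i = \sum_s p s * y (s i)].

Lemma sum_ind (a : 'S_n) (f : 'S_n -> R) : \sum_s (a == s)%:R * f s = f a.
Proof.
rewrite (bigD1 a) //= eqxx mul1r big1 ?addr0 // => s.
by rewrite eq_sym => /negbTE ->; rewrite mul0r.
Qed.

Lemma cp_eq x y : (forall i, x i = y i) -> cp x y.
Proof.
move=> exy.
exists (fun s : 'S_n => ((1%g : 'S_n) == s)%:R); split.
- by move=> s; rewrite ler0n.
- transitivity (\sum_s ((1%g : 'S_n) == s)%:R * (1:R)); first by apply: eq_bigr => s _; rewrite mulr1.
  exact: sum_ind.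
- by move=> i; rewrite sum_ind perm1 exy.
Qed.

Lemma cp_trans x y z : cp x y -> cp y z -> cp x z.
Proof.
move=> [p [p0 p1 hp]] [q [q0 q1 hq]].
exists (fun u => \sum_s \sum_t ((s * t)%g == u)%:R * (p s * q t)); split.
- move=> u; apply: sumr_ge0 => s _; apply: sumr_ge0 => t _.
  by apply: mulr_ge0; [rewrite ler0n | apply: mulr_ge0].
- rewrite exchange_big /=.
  under eq_bigr => s _ do rewrite exchange_big /=.
  under eq_bigr => s _ do under eq_bigr => t _ do rewrite sum_ind.
  under eq_bigr => s _ do rewrite -mulr_sumr q1 mulr1.
  exact: p1.
- move=> i; rewrite hp.
  under [RHS]eq_bigr => u _ do rewrite mulr_suml.
  rewrite exchange_big /=; apply: eq_bigr => s _.
  under eq_bigr => u _ do rewrite mulr_suml.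
  rewrite exchange_big /= hq mulr_sumr; apply: eq_bigr => t _.
  under eq_bigr => u _ do rewrite -mulrA.
  by rewrite sum_ind permM mulrA.
Qed.

Lemma cp_T y (j k : 'I_n) (d : R) : j != k -> y j < y k -> 0 <= d -> d <= y k - y j ->
  cp (fun i => y i + d * ((i == j)%:R - (i == k)%:R)) y.
Proof.
move=> njk ljk d0 d1.
set mu := d / (y k - y j).
have hyp : 0 < y k - y j by rewrite subr_gt0.
have mu0 : 0 <= mu by rewrite divr_ge0 // ltW.
have mu1 : mu <= 1 by rewrite ler_pdivrMr // mul1r.
have dmu : d = mu * (y k - y j) by rewrite /mu divfK // gt_eqF.
clearbody mu.
exists (fun s : 'S_n => (1 - mu) * ((1%g : 'S_n) == s)%:R + mu * (tperm j k == s)%:R); split.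
- by move=> s; apply: addr_ge0; apply: mulr_ge0; rewrite ?ler0n ?subr_ge0.
- rewrite big_split /= -!mulr_sumr.
  have h1 (a : 'S_n) : \sum_s ((a == s)%:R : R) = 1.
    transitivity (\sum_s (a == s)%:R * (1:R)); first by apply: eq_bigr => s _; rewrite mulr1.
    exact: sum_ind.
  by rewrite !h1 !mulr1 subrK.
- move=> i.
  under eq_bigr => s _ do rewrite mulrDl -!mulrA.
  rewrite big_split /= -!mulr_sumr !sum_ind perm1 dmu.
  case: (tpermP j k i) => [->|->|/eqP nij /eqP nik].
  + rewrite eqxx (negbTE njk) /=; lra.
  + rewrite eqxx eq_sym (negbTE njk) /=; lra.
  + rewrite (negbTE nij) (negbTE nik) /=; lra.
Qed.

Definition S m (f : 'I_n -> R) := \sum_(i < n | (i < m)%N) f i.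

Lemma Ssplit (i0 : 'I_n) f : S i0.+1 f = S i0 f + f i0.
Proof.
rewrite /S (bigD1 i0) ?ltnSn //= addrC; congr (_ + _); apply: eq_bigl => i.
by rewrite ltnS ltn_neqAle andbC.
Qed.

Lemma sum_indS m (j : 'I_n) : \sum_(i < n | (i < m)%N) ((i == j)%:R : R) = (j < m)%:R.
Proof.
case: (boolP (j < m)%N) => h.
  rewrite (bigD1 j) //= eqxx big1 ?addr0 // => i /andP[_ /negbTE ->]; done.
apply: big1 => i hi; case: eqP => [E|//]; by move: h; rewrite -E hi.
Qed.

Lemma main_cp (x : 'I_n -> R) : (forall i j : 'I_n, (i <= j)%N -> x i <= x j) ->
  forall y, (forall m, (m <= n)%N -> S m y <= S m x) -> S n y = S n x -> cp x y.
Proof.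
move=> xs.
suff H : forall N y, (#|[set i | x i != y i]| <= N)%N ->
  (forall m, (m <= n)%N -> S m y <= S m x) -> S n y = S n x -> cp x y.
  by move=> y; apply: (H _ y (leqnn _)).
elim=> [|N IH] y hc hp he.
  apply: cp_eq => i; apply/eqP; move: hc; rewrite leqn0 cards_eq0 => /eqP/setP/(_ i).
  by rewrite inE in_set0 => /negbFE.
case: (boolP [exists i, x i != y i]) => [/existsP [i0 hi0] | /existsPn hall]; last first.
  by apply: cp_eq => i; move: (hall i); rewrite negbK => /eqP.
have [k0 hk0] : exists k, x k < y k.
  case: (boolP [exists k, x k < y k]) => [/existsP//|/existsPn hn].
  have hle : forall i, 0 <= x i - y i by move=> i; rewrite subr_ge0 leNgt hn.
  have : \sum_(i < n | (i < n)%N) (x i - y i) = 0 by rewrite sumrB -/(S n x) -/(S n y) he subrr.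
  move/(psumr_eq0P (fun i _ => hle i))/(_ i0 (ltn_ord i0))/eqP.
  by rewrite subr_eq0 (negbTE hi0).
case: (@arg_minnP _ k0 (fun i => x i < y i) (fun i => nat_of_ord i) hk0).
move=> k hk kmin.
have [j0 /andP [hj0k hj0]] : exists j : 'I_n, (j < k)%N && (y j < x j).
  case: (boolP [exists j : 'I_n, (j < k)%N && (y j < x j)]) => [/existsP//|/existsPn hn].
  have hle : S k x <= S k y.
    apply: ler_sum => i hi; move: (hn i); rewrite hi /= -leNgt; done.
  have := hp k.+1 (ltn_ord k); rewrite !Ssplit => h2.
  exfalso; lra.
have hP : (fun i : 'I_n => (i < k)%N && (y i < x i)) j0 by rewrite /= hj0k hj0.
case: (@arg_maxnP _ j0 (fun i => (i < k)%N && (y i < x i)) (fun i => nat_of_ord i) hP).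
move=> j /andP [jk hj] jmax.
have between : forall i : 'I_n, (j < i)%N -> (i < k)%N -> x i = y i.
  move=> i h1 h2; apply/eqP; rewrite eq_le; apply/andP; split.
    rewrite leNgt; apply/negP => h3; have := jmax i; rewrite h2 h3 => /(_ isT).
    by move=> hij; move: (leq_ltn_trans hij h1); rewrite ltnn.
  rewrite leNgt; apply/negP => /kmin; rewrite leqNgt h2 //.
have xjk : x j <= x k by apply: xs; apply: ltnW.
have njk : j != k by apply/eqP => E; move: jk; rewrite E ltnn.
have ltn_eqF_ord : forall a b : 'I_n, (a < b)%N -> (b == a) = false.
  by move=> a b hab; apply/negbTE/eqP => E; move: hab; rewrite E ltnn.
have [d [d0 [dj [dk dw]]]] : exists d, 0 < d /\ d <= x j - y j /\ d <= y k - x k /\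
   (d = x j - y j \/ d = y k - x k).
  case: (leP (x j - y j) (y k - x k)) => h; [exists (x j - y j) | exists (y k - x k)]; lra.
pose y' := fun i => y i + d * ((i == j)%:R - (i == k)%:R).
have cpy : cp y' y by apply: cp_T => //; lra.
have tot : forall m, S m y' = S m y + d * ((j < m)%:R - (k < m)%:R).
  move=> m; rewrite /S /y' big_split /= -mulr_sumr sumrB !sum_indS //.
apply: (cp_trans (y := y')) => //.
apply: IH.
- rewrite -ltnS; apply: leq_trans hc; apply: proper_card; apply/properP; split.
    apply/subsetP => i; rewrite !inE; case: (eqVneq i j) => [->|nij].
      by rewrite (gt_eqF hj).
    case: (eqVneq i k) => [->|nik]; first by rewrite (lt_eqF hk).
    by rewrite /y' (negbTE nij) (negbTE nik) subrr mulr0 addr0.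
  case: dw => dw.
    exists j; rewrite !inE ?(gt_eqF hj) //= negbK /y' eqxx (negbTE njk).
    by apply/eqP; rewrite dw /= subr0 mulr1; lra.
  exists k; rewrite !inE ?(lt_eqF hk) //= negbK /y' eqxx (ltn_eqF_ord _ _ jk).
  by apply/eqP; rewrite dw /= sub0r mulrN1; lra.
- move=> m hm; rewrite tot.
  case: (ltnP j m) => hjm; last first.
    have -> : (k < m)%N = false by apply/negbTE; rewrite -leqNgt; lia.
    by rewrite subrr mulr0 addr0; apply: hp.
  case: (ltnP k m) => hkm; first by rewrite subrr mulr0 addr0; apply: hp.
  have e1 : S m x - S m y = S j x - S j y + (x j - y j).
    have -> : S j x - S j y + (x j - y j) = S j.+1 x - S j.+1 y.
      by rewrite !Ssplit; lra.
    rewrite /S -!sumrB [LHS]big_mkcond [RHS]big_mkcond /=.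
    apply: eq_bigr => i _.
    case: (ltnP i j.+1) => h1; case: (ltnP i m) => h2 //=; try lia.
    by rewrite (between i) ?subrr //; lia.
  rewrite /= subr0 mulr1; have := hp j (ltnW (ltn_ord j)); lra.
- by rewrite tot ltn_ord ltn_ord subrr mulr0 addr0.
Qed.
End Cp.
Section Mat.
Variable R : realType.
Variable n : nat.
Notation J := (Jmx R n).

Lemma sympl_mul (M N : 'M[R]_(n + n)) : symplectic M -> symplectic N -> symplectic (M *m N).
Proof.
rewrite /symplectic => hM hN; rewrite trmx_mul -!mulmxA (mulmxA M^T) (mulmxA (M^T *m J)) hM.
by rewrite !mulmxA.
Qed.

Lemma J2 : J *m J = - 1%:M.
Proof.
rewrite /Jmx mulmx_block !mul0mx !mulmx0 !mulmx1 !mulmxN !mulmx1 !addr0 !add0r.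
by rewrite (scalar_mx_block n n 1) opp_block_mx !oppr0.
Qed.

Lemma sympl_inv (M : 'M[R]_(n + n)) : symplectic M ->
  exists L, [/\ L *m M = 1%:M, M *m L = 1%:M & symplectic L].
Proof.
move=> hM; exists (- (J *m M^T *m J)).
have h1 : - (J *m M^T *m J) *m M = 1%:M.
  by rewrite mulNmx -!mulmxA (mulmxA M^T) hM J2 opprK.
have h2 := mulmx1C h1.
set L := - _ in h1 h2 *.
split => //; rewrite /symplectic -{1}hM.
by rewrite !mulmxA -trmx_mul h2 trmx1 mul1mx -mulmxA h2 mulmx1.
Qed.

Definition Q (s : 'S_n) : 'M[R]_(n + n) := block_mx (perm_mx s)^T 0 0 (perm_mx s)^T.

Lemma QT s : (Q s)^T = block_mx (perm_mx s) 0 0 (perm_mx s).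
Proof. by rewrite /Q tr_block_mx !trmxK !trmx0. Qed.

Lemma PPT (s : 'S_n) : perm_mx s *m (perm_mx s)^T = 1%:M :> 'M[R]_n.
Proof. by rewrite tr_perm_mx -perm_mxM mulgV perm_mx1. Qed.

Lemma Q_sympl s : symplectic (Q s).
Proof.
rewrite /symplectic QT /Q /Jmx !mulmx_block !(mul0mx, mulmx0, mulmx1, mulmxN, addr0, add0r, mulNmx).
by rewrite PPT.
Qed.

Lemma Q_diag (s : 'S_n) (d : 'rV[R]_n) :
  (Q s)^T *m block_mx (diag_mx d) 0 0 (diag_mx d) *m Q s =
  block_mx (diag_mx (\row_i d 0 (s i))) 0 0 (diag_mx (\row_i d 0 (s i))).
Proof.
have e : perm_mx s *m diag_mx d *m (perm_mx s)^T = diag_mx (\row_i d 0 (s i)).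
  rewrite tr_perm_mx -mulmxA -col_permE -row_permE.
  apply/matrixP => i j; rewrite !mxE (inj_eq perm_inj).
  by case: eqP => [->|_]; rewrite ?mxE.
rewrite QT /Q !mulmx_block !(mul0mx, mulmx0, addr0, add0r).
by rewrite e.
Qed.

Lemma block_sum (I : finType) (p : I -> R) (X : I -> 'M[R]_n) :
  block_mx (\sum_i p i *: X i) 0 0 (\sum_i p i *: X i) =
  \sum_i p i *: block_mx (X i) 0 0 (X i).
Proof.
apply: (big_rec2 (fun a b => block_mx a 0 0 a = b)).
  by rewrite block_mx0.
move=> i a b _ <-.
by rewrite scale_block_mx add_block_mx !scaler0 !addr0.
Qed.
End Mat.
Section Srt.
Variable R : realType.
Variable n : nat.

Lemma nth_mapord (f : 'I_n -> R) i (hi : (i < n)%N) :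
  [seq f j | j <- enum 'I_n]`_i = f (Ordinal hi).
Proof.
rewrite (nth_map (Ordinal hi)) ?size_enum_ord //.
by change i with (nat_of_ord (Ordinal hi)); rewrite nth_ord_enum.
Qed.

Lemma sort_up_sorted (d : 'rV[R]_n) :
  (forall i j : 'I_n, (i <= j)%N -> d 0 i <= d 0 j) ->
  sort_up d = [seq d 0 j | j <- enum 'I_n].
Proof.
move=> hs; apply: sorted_sort; first exact: le_trans.
apply/(sortedP 0) => i; rewrite size_map size_enum_ord => hi.
by rewrite (nth_mapord (fun j => d 0 j) (ltnW hi)) (nth_mapord (fun j => d 0 j) hi); apply: hs.
Qed.

Lemma psum_S (f : 'I_n -> R) k : (k <= n)%N ->
  \sum_(0 <= j < k) [seq f j | j <- enum 'I_n]`_j = S k f.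
Proof.
move=> hk; rewrite /S.
transitivity (\sum_(i < n | (i < k)%N) [seq f j | j <- enum 'I_n]`_i).
  rewrite -(big_mkord (fun i => i < k)%N) (big_nat_widen 0 _ _ _ _ hk).
  by apply: eq_bigl.
apply: eq_bigr => i _; rewrite (nth_mapord f (ltn_ord i)); congr f; exact: val_inj.
Qed.
End Srt.

Theorem theorem3p1 (R : realType) (n : nat) (A B : 'M[R]_(n + n))
  (dA dB : 'rV[R]_n) :
  sym_psd A -> sym_psd B ->
  symplectic_kernel A -> symplectic_kernel B ->
  symp_eigs A dA -> symp_eigs B dB ->
  majorized dA dB ->
  exists (p : 'S_n -> R) (M : 'S_n -> 'M[R]_(n + n)),
    [/\ forall s, 0 <= p s,
        \sum_(s : 'S_n) p s = 1,
        forall s, symplectic (M s) &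
        A = \sum_(s : 'S_n) p s *: ((M s)^T *m B *m M s)].
Proof.
move=> _ _ _ _ [dA0 [dAs [MA hMA eA]]] [dB0 [dBs [MB hMB eB]]] [hpre htot].
rewrite (sort_up_sorted dAs) (sort_up_sorted dBs) in hpre htot.
have hcp : cp (fun i => dA 0 i) (fun i => dB 0 i).
  apply: main_cp => //.
  - move=> m hm; case: m hm => [|m] hm.
      by rewrite /S !big_pred0.
    by rewrite -!psum_S //; apply: hpre; rewrite hm.
  - by rewrite -!psum_S.
case: hcp => p [p0 p1 hp].
have [L [hLM hML hL]] := sympl_inv hMA.
exists p, (fun s => MB *m @Q R n s *m L); split => //.
  by move=> s; apply: sympl_mul => //; apply: sympl_mul => //; apply: Q_sympl.
have hA : A = L^T *m block_mx (diag_mx dA) 0 0 (diag_mx dA) *m L.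
  have e1 : L^T *m MA^T = 1%:M by rewrite -trmx_mul hML trmx1.
  by rewrite -eA !mulmxA e1 mul1mx -mulmxA hML mulmx1.
have hD : diag_mx dA = \sum_s p s *: diag_mx (\row_i dB 0 (s i)).
  apply/matrixP => i j; rewrite summxE !mxE.
  case: eqP => [<-|/eqP nij].
    by rewrite mulr1n hp; apply: eq_bigr => s _; rewrite !mxE eqxx mulr1n.
  by rewrite mulr0n big1 // => s _; rewrite !mxE (negbTE nij) mulr0n mulr0.
rewrite hA hD block_sum.
under eq_bigr => s _ do rewrite -Q_diag.
rewrite mulmx_sumr mulmx_suml; apply: eq_bigr => s _.
rewrite -scalemxAr -scalemxAl; congr (_ *: _).
by rewrite !trmx_mul -eB !mulmxA.
Qed.
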